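(* Let $\mathbf{F}$ and $\mathbf{E}$ be normed spaces of functions over a set $X$, with $\mathbf{F}$ being $1$-independent. Then: (i) if $\mathbf{E}$ is regular, then so is $Mult(\mathbf{F},\mathbf{E})$; (ii) $Mult(\mathbf{F},\mathbf{E})\subset Mult(\widehat{\mathbf{F}},\widehat{\mathbf{E}})$ and $\|\omega\|_{Mult(\widehat{\mathbf{F}},\widehat{\mathbf{E}})}\le\|\omega\|_{Mult(\mathbf{F},\mathbf{E})}$ for all $\omega\in Mult(\mathbf{F},\mathbf{E})$.
   Context: $\mathcal{F}(X)$ is the space of all functions $X\to\mathbb{C}$ with the topology of pointwise convergence. A normed space of functions (NSF) over $X$ is a linear subspace of $\mathcal{F}(X)$ with a norm for which every point evaluation is bounded; it is $1$-independent if for each $x$ some $f\in\mathbf{F}$ has $f(x)\ne0$, and regular if its closed unit ball is closed in $\mathcal{F}(X)$. For an NSF $\mathbf{F}$, let $C_{\mathbf{F}}$ be the closure in $\mathcal{F}(X)$ of the unit ball of $\mathbf{F}$; $\widehat{\mathbf{F}}=\{\alpha f:\alpha>0,\ f\in C_{\mathbf{F}}\}$ is the NSF over $X$ whose closed unit ball is $C_{\mathbf{F}}$ (norm = Minkowski functional of $C_{\mathbf{F}}$). $Mult(\mathbf{F},\mathbf{E})$ is the set of $\omega:X\to\mathbb{C}$ with $\omega f\in\mathbf{E}$ for all $f\in\mathbf{F}$ and $M_\omega:f\mapsto\omega f$ bounded $\mathbf{F}\to\mathbf{E}$, normed by $\|M_\omega\|$ (a normed space of functions over $X$ when $\mathbf{F}$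 is $1$-independent). *)

(* Defs.v *)
From HB Require Import structures.
From mathcomp Require Import all_boot all_order all_algebra.
From mathcomp Require Import complex.
From mathcomp Require Import classical_sets boolp reals.
From Stdlib Require List.

Set Implicit Arguments. Unset Strict Implicit. Unset Printing Implicit Defensive.
Import Order.TTheory GRing.Theory Num.Theory.
Local Open Scope ring_scope.
Local Open Scope classical_set_scope.

Section NSF.
Context {R : realType} {X : Type}.

Local Notation fn := (X -> R[i]).

Definition cabs (z : R[i]) : R := Normc.normc z.

Definition fzero : fn := fun _ => 0.
Definition fadd (f g : fn) : fn := fun x => f x + g x.
Definition fscale (a : R[i]) (f : fn) : fn := fun x => a * f x.
Definition fmul (w f : fn) : fn := fun x => w x * f x.

(* A normed space of functions: a linear subspace S of F(X) with a norm n
   (only its values on S matter) such that each point evaluation is bounded. *)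
Definition is_NSF (S : set fn) (n : fn -> R) : Prop :=
  [/\ S fzero,
      (forall f g, S f -> S g -> S (fadd f g)) &
      (forall a f, S f -> S (fscale a f))] /\
  [/\ (forall f, S f -> 0 <= n f),
      (forall f, S f -> n f = 0 -> f = fzero),
      (forall a f, S f -> n (fscale a f) = cabs a * n f) &
      (forall f g, S f -> S g -> n (fadd f g) <= n f + n g)] /\
  (forall x : X, exists c : R, forall f, S f -> cabs (f x) <= c * n f).

Definition one_independent (S : set fn) : Prop :=
  forall x : X, exists f, S f /\ f x <> 0.

(* closure in F(X) for the topology of pointwise convergence (product
   topology): f is adherent to A iff every basic neighbourhood of f, given by
   finitely many points and a radius e > 0, meets A. *)
Definition ptws_closure (A : set fn) : set fn :=
  fun f => forall (xs : seq X) (e : R), 0 < e ->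
    exists g, A g /\ forall x, List.In x xs -> cabs (g x - f x) < e.

Definition ptws_closed (A : set fn) : Prop := ptws_closure A `<=` A.

Definition unit_ball (S : set fn) (n : fn -> R) : set fn :=
  [set f | S f /\ n f <= 1].

Definition regular (S : set fn) (n : fn -> R) : Prop :=
  ptws_closed (unit_ball S n).

Definition CF (S : set fn) (n : fn -> R) : set fn :=
  ptws_closure (unit_ball S n).

Definition hat_set (S : set fn) (n : fn -> R) : set fn :=
  [set h | exists (a : R) g, 0 < a /\ CF S n g /\ h = fscale (Complex a 0) g].

Definition hat_norm (S : set fn) (n : fn -> R) (h : fn) : R :=
  inf [set a : R | 0 < a /\ exists g, CF S n g /\ h = fscale (Complex a 0) g].

Definition mult_set (S : set fn) (n : fn -> R) (T : set fn) (m : fn -> R)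
  : set fn :=
  [set w | (forall f, S f -> T (fmul w f)) /\
           exists c : R, forall f, S f -> m (fmul w f) <= c * n f].

Definition mult_norm (S : set fn) (n : fn -> R) (T : set fn) (m : fn -> R)
  (w : fn) : R :=
  sup [set r : R | exists f, S f /\ n f <= 1 /\ r = m (fmul w f)].

End NSF.

(* Main.v *)
Require Import Defs.
From HB Require Import structures.
From mathcomp Require Import all_boot all_order all_algebra.
From mathcomp Require Import complex.
From mathcomp Require Import classical_sets boolp reals.
From mathcomp Require Import ring lra.
From Stdlib Require List.
Import Order.TTheory GRing.Theory Num.Theory.
Local Open Scope ring_scope.
Local Open Scope classical_set_scope.
Set Implicit Arguments. Unset Strict Implicit. Unset Printing Implicit Defensive.

Section Aux.
Context {R : realType} {X : Type}.
Local Notation fn := (X -> R[i]).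

Lemma cabs_ge0 (z : R[i]) : 0 <= cabs z.
Proof. by case: z => a b; rewrite /cabs /= sqrtr_ge0. Qed.

Lemma cabsM (a b : R[i]) : cabs (a * b) = cabs a * cabs b.
Proof. exact: Normc.normcM. Qed.

Lemma cabs_real (a : R) : cabs (Complex a 0) = `|a|.
Proof. by rewrite /cabs /= expr0n /= addr0 sqrtr_sqr. Qed.

Lemma complex_realM (a b : R) : Complex a 0 * Complex b 0 = Complex (a * b) 0 :> R[i].
Proof. by apply/eqP; rewrite eq_complex /= !mulr0 !mul0r subr0 addr0 !eqxx. Qed.

Lemma closure_mono (A B : set fn) : A `<=` B -> ptws_closure A `<=` ptws_closure B.
Proof.
move=> AB f cf xs e e0; have [g [Ag Hg]] := cf xs e e0.
by exists g; split => //; apply: AB.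
Qed.

Lemma list_bound (k : fn) (xs : seq X) :
  exists K : R, 0 < K /\ forall x, List.In x xs -> cabs (k x) <= K.
Proof.
elim: xs => [|a xs [K [K0 HK]]]; first by exists 1; split.
exists (K + cabs (k a)); split; first by have := cabs_ge0 (k a); lra.
move=> x /= [<-|Hx]; first by lra.
by have := HK x Hx; have := cabs_ge0 (k a); lra.
Qed.

Lemma closure_mul (k : fn) (A : set fn) g : ptws_closure A g ->
  ptws_closure [set fmul k f | f in A] (fmul k g).
Proof.
move=> cg xs e e0; have [K [K0 HK]] := list_bound k xs.
have eK : 0 < e / K by rewrite divr_gt0.
have [f [Af Hf]] := cg xs _ eK.
exists (fmul k f); split; first by exists f.
move=> x Hx; rewrite /fmul -mulrBr cabsM.
have h1 := HK x Hx; have h2 := Hf x Hx.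
have h3 := cabs_ge0 (f x - g x); have h4 := cabs_ge0 (k x).
have h5 : K * (e / K) = e by rewrite mulrC divfK // gt_eqF.
set u := cabs (k x) in h1 h4 *; set v := cabs (f x - g x) in h2 h3 *.
set t := e / K in h2 h5 eK *.
nra.
Qed.

Lemma fmul0 (w : fn) : fmul w fzero = fzero.
Proof. by apply/funext => x; rewrite /fmul /fzero mulr0. Qed.

Lemma fmulZ (w : fn) a f : fmul w (fscale a f) = fscale a (fmul w f).
Proof. by apply/funext => x; rewrite /fmul /fscale mulrCA. Qed.

Lemma fscaleA a b (f : fn) : fscale a (fscale b f) = fscale (a * b) f.
Proof. by apply/funext => x; rewrite /fscale mulrA. Qed.

Lemma fscale1 (f : fn) : fscale 1 f = f.
Proof. by apply/funext => x; rewrite /fscale mul1r. Qed.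

Lemma nsf_zero (S : set fn) n : is_NSF S n -> n fzero = 0.
Proof.
move=> [[S0 _ _] [[_ _ nZ _] _]].
have -> : (fzero : fn) = fscale 0 fzero by apply/funext => x; rewrite /fscale mul0r.
by rewrite nZ // /cabs /= expr0n /= addr0 sqrtr0 mul0r.
Qed.

Lemma nsf_decomp (S : set fn) n f : is_NSF S n -> S f -> 0 < n f ->
  let u := fscale (Complex (n f)^-1 0) f in
  [/\ S u, n u = 1 & f = fscale (Complex (n f) 0) u].
Proof.
move=> [[S0 SD SZ] [[n0 n00 nZ _] _]] Sf nf u; split.
- exact: SZ.
- by rewrite /u nZ // cabs_real ger0_norm ?invr_ge0 ?ltW // mulVf // gt_eqF.
- by rewrite /u fscaleA complex_realM mulfV ?gt_eqF // fscale1.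
Qed.

Lemma extend_ball (F E : set fn) nF nE (w : fn) (c : R) :
  is_NSF F nF -> is_NSF E nE ->
  (forall u, F u -> nF u <= 1 -> E (fmul w u) /\ nE (fmul w u) <= c) ->
  forall f, F f -> E (fmul w f) /\ nE (fmul w f) <= c * nF f.
Proof.
move=> hF hE H f Ff.
have hF' := hF; have hE' := hE.
move: hF' hE' => [[F0 _ _] [[nF0 nF00 _ _] _]] [[E0 _ EZ] [[_ _ nEZ _] _]].
have [nf0|nfp] := eqVneq (nF f) 0.
  have -> := nF00 f Ff nf0; by rewrite fmul0 (nsf_zero hE) (nsf_zero hF) mulr0.
have nfp' : 0 < nF f by rewrite lt_def nfp nF0.
have [Su nu fdec] := nsf_decomp hF Ff nfp'.
move: Su nu fdec; set u := fscale _ f => Su nu fdec.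
have fd : fmul w f = fscale (Complex (nF f) 0) (fmul w u) by rewrite {1}fdec fmulZ.
have [Ewu nwu] : E (fmul w u) /\ nE (fmul w u) <= c by apply: H => //; rewrite nu.
rewrite fd nEZ // cabs_real ger0_norm ?(ltW nfp') //; split; first exact: EZ.
by rewrite mulrC ler_wpM2r // ltW.
Qed.

Lemma mult_bound (F E : set fn) nF nE (v : fn) f :
  is_NSF F nF -> is_NSF E nE -> mult_set F nF E nE v -> F f -> nF f <= 1 ->
  nE (fmul v f) <= mult_norm F nF E nE v.
Proof.
move=> hF hE [Mv [c Hc]] Ff nf1.
have hF' := hF; move: hF' => [[F0 _ _] [[nF0 _ _ _] _]].
apply: sup_upper_bound; last by exists f.
split.
  exists (nE (fmul v fzero)), fzero; split => //; split => //.
  by rewrite (nsf_zero hF) ler01.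
exists `|c| => r [g [Fg [ng1 ->]]].
apply: le_trans (Hc g Fg) _.
have h1 := ler_norm c; have h2 := normr_ge0 c; have h3 := nF0 g Fg.
set C := `|c| in h1 h2 *; set t := nF g in ng1 h3 *.
nra.
Qed.

Lemma mult_bound_gen (F E : set fn) nF nE (v : fn) f :
  is_NSF F nF -> is_NSF E nE -> mult_set F nF E nE v -> F f ->
  nE (fmul v f) <= mult_norm F nF E nE v * nF f.
Proof.
move=> hF hE Mv Ff.
apply: (proj2 (extend_ball hF hE _ Ff)) => u Fu nu1.
by split; [exact: (proj1 Mv) | exact: mult_bound].
Qed.

Lemma part1 (F E : set fn) nF nE :
  is_NSF F nF -> is_NSF E nE ->
  regular E nE -> regular (mult_set F nF E nE) (mult_norm F nF E nE).
Proof.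
move=> hF hE regE w cw.
have hF' := hF; move: hF' => [[F0 _ _] [[nF0 _ _ _] _]].
have claim : forall u, F u -> nF u <= 1 -> E (fmul w u) /\ nE (fmul w u) <= 1.
  move=> u Fu nu1; apply: regE.
  have -> : fmul w u = fmul u w by apply/funext => x; rewrite /fmul mulrC.
  apply: closure_mono (closure_mul u cw).
  move=> _ [v [Mv nv1] <-].
  have -> : fmul u v = fmul v u by apply/funext => x; rewrite /fmul mulrC.
  split; first exact: (proj1 Mv).
  exact: le_trans (mult_bound hF hE Mv Fu nu1) nv1.
have ext := extend_ball hF hE claim.
have Mw : mult_set F nF E nE w.
  split; first by move=> f Ff; exact: (proj1 (ext f Ff)).
  by exists 1 => f Ff; exact: (proj2 (ext f Ff)).
split => //.
apply: ge_sup.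
  exists (nE (fmul w fzero)), fzero; split => //; split => //.
  by rewrite (nsf_zero hF) ler01.
by move=> r [g [Fg [ng1 ->]]]; exact: (proj2 (claim g Fg ng1)).
Qed.

Lemma closure_self (A : set fn) g : A g -> ptws_closure A g.
Proof.
move=> Ag xs e e0; exists g; split => // x _.
by rewrite subrr /cabs /= expr0n /= addr0 sqrtr0.
Qed.

Lemma fscale_zero a : fscale a (fzero : fn) = fzero.
Proof. by apply/funext => x; rewrite /fscale /fzero mulr0. Qed.

Lemma hat_norm_le (S : set fn) n h a g : 0 < a -> CF S n g ->
  h = fscale (Complex a 0) g -> hat_norm S n h <= a.
Proof.
move=> a0 cg hd; apply: ge_inf; last by split => //; exists g.
by exists 0 => x [x0 _]; exact: ltW.
Qed.

Lemma hat_norm_lb (S : set fn) n h x : hat_set S n h ->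
  (forall a g, 0 < a -> CF S n g -> h = fscale (Complex a 0) g -> x <= a) ->
  x <= hat_norm S n h.
Proof.
move=> [a [g [a0 [cg hd]]]] H; apply: lb_le_inf.
  by exists a; split => //; exists g.
by move=> b [b0 [g' [cg' hd']]]; exact: H cg' hd'.
Qed.

Lemma part2 (F E : set fn) nF nE (w : fn) :
  is_NSF F nF -> is_NSF E nE -> mult_set F nF E nE w ->
  mult_set (hat_set F nF) (hat_norm F nF) (hat_set E nE) (hat_norm E nE) w /\
  mult_norm (hat_set F nF) (hat_norm F nF) (hat_set E nE) (hat_norm E nE) w
     <= mult_norm F nF E nE w.
Proof.
move=> hF hE Mw.
have hF' := hF; move: hF' => [[F0 _ _] [[nF0 _ _ _] _]].
have hE' := hE; move: hE' => [[E0 _ EZ] [[_ _ nEZ _] _]].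
set m := mult_norm F nF E nE w.
have m0 : 0 <= m.
  have := mult_bound hF hE Mw F0; rewrite fmul0 (nsf_zero hE) (nsf_zero hF).
  by apply; rewrite ler01.
have key : forall c, m < c -> forall g, CF F nF g ->
    CF E nE (fscale (Complex c^-1 0) (fmul w g)).
  move=> c mc g cg; have c0 : 0 < c by exact: le_lt_trans mc.
  have -> : fscale (Complex c^-1 0) (fmul w g) =
            fmul (fun x => Complex c^-1 0 * w x) g.
    by apply/funext => x; rewrite /fscale /fmul mulrA.
  apply: closure_mono (closure_mul _ cg).
  move=> _ [f [Ff nf1] <-].
  have -> : fmul (fun x => Complex c^-1 0 * w x) f =
            fscale (Complex c^-1 0) (fmul w f).
    by apply/funext => x; rewrite /fscale /fmul mulrA.
  split; first by apply: EZ; exact: (proj1 Mw).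
  rewrite nEZ; last exact: (proj1 Mw).
  rewrite cabs_real ger0_norm; last by rewrite invr_ge0 ltW.
  rewrite ler_pdivrMl // mulr1.
  exact: le_trans (mult_bound hF hE Mw Ff nf1) (ltW mc).
have hatmem : forall c a g, m < c -> 0 < a ->
    fmul w (fscale (Complex a 0) g) =
    fscale (Complex (a * c) 0) (fscale (Complex c^-1 0) (fmul w g)).
  move=> c a g mc a0; have c0 : 0 < c by exact: le_lt_trans mc.
  by rewrite fmulZ fscaleA complex_realM mulfK // gt_eqF.
have bound : forall c, m < c -> forall h, hat_set F nF h ->
    hat_set E nE (fmul w h) /\ hat_norm E nE (fmul w h) <= c * hat_norm F nF h.
  move=> c mc h hh; have c0 : 0 < c by exact: le_lt_trans mc.
  have hh' := hh; move: hh' => [a [g [a0 [cg ->]]]].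
  split.
    exists (a * c), (fscale (Complex c^-1 0) (fmul w g)); split.
      exact: mulr_gt0.
    by split; [exact: key | exact: hatmem].
  rewrite -ler_pdivrMl //; apply: hat_norm_lb; first by exists a, g.
  move=> a' g' a'0 cg' hd.
  rewrite ler_pdivrMl // hd mulrC.
  apply: (hat_norm_le (mulr_gt0 a'0 c0) (key c mc g' cg')).
  exact: hatmem.
have hat0 : hat_set F nF fzero.
  exists 1, fzero; split; first exact: ltr01.
  split; last first.
    by apply/funext => x; rewrite /fscale /fzero; exact: (esym (mulr0 _)).
  by apply: closure_self; split => //; rewrite (nsf_zero hF) ler01.
have m1 : m < m + 1 by rewrite ltrDl ltr01.
split.
  split; first by move=> h hh; exact: (proj1 (bound _ m1 h hh)).
  by exists (m + 1) => h hh; exact: (proj2 (bound _ m1 h hh)).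
apply: ge_sup.
  exists (hat_norm E nE (fmul w fzero)), fzero; split => //; split => //.
  have ub0 : unit_ball F nF fzero.
    by split => //; rewrite (nsf_zero hF) ler01.
  have e0 : (fzero : fn) = fscale (Complex 1 0) fzero.
    by apply/funext => x; rewrite /fscale /fzero; exact: (esym (mulr0 _)).
  exact: (hat_norm_le ltr01 (closure_self ub0) e0).
move=> r [h [hh [nh1 ->]]]; apply/ler_addgt0Pr => e e0.
have me : m < m + e by rewrite ltrDl.
apply: le_trans (proj2 (bound _ me h hh)) _.
by rewrite -{2}[m + e]mulr1 ler_wpM2l // ltW // (le_lt_trans m0).
Qed.

End Aux.

Theorem proposition5p5 (R : realType) (X : Type)
  (F : set (X -> R[i])) (nF : (X -> R[i]) -> R)
  (E : set (X -> R[i])) (nE : (X -> R[i]) -> R) :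
  is_NSF F nF -> is_NSF E nE -> one_independent F ->
  (regular E nE -> regular (mult_set F nF E nE) (mult_norm F nF E nE)) /\
  (forall w, mult_set F nF E nE w ->
     mult_set (hat_set F nF) (hat_norm F nF) (hat_set E nE) (hat_norm E nE) w /\
     mult_norm (hat_set F nF) (hat_norm F nF) (hat_set E nE) (hat_norm E nE) w
       <= mult_norm F nF E nE w).
Proof.
move=> hF hE _; split; first exact: part1.
by move=> w Mw; exact: part2.
Qed.
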